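(* A set $\mathcal{X}\subseteq\mathbb{Z}_2^\omega$ is a xor-set if and only if there exists a selector $\mathcal{S}$ of the family $\mathcal{P}$ (i.e. a set $\mathcal{S}$ containing exactly one element of each pair in $\mathcal{P}$) such that $\mathcal{X}=\bigcup\mathcal{S}$.
   Context: $\mathbb{Z}_2^\omega$ is the set of infinite binary sequences indexed by $\omega=\{0,1,2,\dots\}$. The Hamming distance is $\mathrm{hd}(x,y)=|\{k: x(k)\ne y(k)\}|\in\omega\cup\{\omega\}$; $x\sim y$ iff $\mathrm{hd}(x,y)$ is finite, and $x\approx y$ iff $\mathrm{hd}(x,y)$ is finite and even. Each equivalence class $C$ of $\sim$ is the union of exactly two equivalence classes $U_0(C),U_1(C)$ of $\approx$; let $\mathcal{P}=\{\{U_0(C),U_1(C)\}: C\in\mathbb{Z}_2^\omega/_\sim\}$. For $x\in\mathbb{Z}_2^\omega$ and $n\in\omega$, $x^{\#n}$ is the sequence obtained from $x$ by flipping the $n$-th coordinate ($x^{\#n}(k)=x(k)$ for $k\ne n$, $x^{\#n}(n)=1-x(n)$). A set $\mathcal{X}\subseteq\mathbb{Z}_2^\omega$ is a xor-set if for every $n\in\omega$ and $x\in\mathbb{Z}_2^\omega$: $x\in\mathcal{X}\iff x^{\#n}\notin\mathcal{X}$. *)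

(* Defs.v *)
From mathcomp Require Import all_boot.
Set Implicit Arguments. Unset Strict Implicit. Unset Printing Implicit Defensive.

Definition seq2 := nat -> bool.
Definition pset (T : Type) := T -> Prop.

(* hd x y = n (finite): the set of differing coordinates is listed
   without repetition by a sequence of length n *)
Definition hd_eq (x y : seq2) (n : nat) : Prop :=
  exists s : seq nat, uniq s /\ (forall k, k \in s <-> x k != y k) /\ size s = n.

(* x ~ y : hd finite;  x ≈ y : hd finite and even *)
Definition sim (x y : seq2) : Prop := exists n, hd_eq x y n.
Definition approx (x y : seq2) : Prop := exists n, hd_eq x y n /\ ~~ odd n.

Definition sim_class (C : pset seq2) : Prop := exists x, C = (fun y => sim x y).
Definition approx_class (U : pset seq2) : Prop := exists x, U = (fun y => approx x y).

(* P = { {U0(C),U1(C)} : C a ~-class }, where {U0(C),U1(C)} is the set of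
   ≈-classes contained in C *)
Definition Pfam : pset (pset (pset seq2)) :=
  fun p => exists C, sim_class C /\ p = (fun U => approx_class U /\ forall y, U y -> C y).

Definition selector (T : Type) (F : pset (pset T)) (S : pset T) : Prop :=
  (forall U, S U -> exists p, F p /\ p U) /\
  (forall p, F p -> exists! U, p U /\ S U).

Definition bigU (S : pset (pset seq2)) : pset seq2 := fun x => exists U, S U /\ U x.

Definition flip (x : seq2) (n : nat) : seq2 :=
  fun k => if k == n then ~~ x n else x k.

Definition xor_set (X : pset seq2) : Prop :=
  forall (n : nat) (x : seq2), X x <-> ~ X (flip x n).

(* Main.v *)
Require Import Defs.
From mathcomp Require Import all_boot.
From Stdlib Require Import Classical FunctionalExtensionality PropExtensionality.
Set Implicit Arguments. Unset Strict Implicit.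
Fixpoint dd (x y : seq2) (N : nat) : nat :=
  if N is N'.+1 then dd x y N' + (x N' != y N') else 0.
Definition ag (x y : seq2) N := forall k, N <= k -> x k = y k.

Lemma count_dd x y N : count (fun k => x k != y k) (iota 0 N) = dd x y N.
Proof.
elim: N => [|N IH] //. rewrite -addn1 iotaD count_cat IH /= add0n addn0 addn1 //.
Qed.

Lemma bound_s (s : seq nat) k : k \in s -> k < (foldr maxn 0 s).+1.
Proof.
elim: s => [|a s IH] //=. rewrite in_cons => /orP [/eqP ->|/IH h].
  by rewrite ltnS leq_maxl.
by apply: (leq_trans h); rewrite ltnS leq_maxr.
Qed.

Lemma hd_to x y n : hd_eq x y n -> exists N, ag x y N /\ n = dd x y N.
Proof.
move=> [s [us [ms <-]]]. exists (foldr maxn 0 s).+1; split.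
  move=> k hk; apply/eqP; apply/negPn/negP => /ms /bound_s; rewrite ltnNge hk //.
rewrite -count_dd -size_filter; apply: perm_size; apply: uniq_perm => //.
  by rewrite filter_uniq // iota_uniq.
move=> k; rewrite mem_filter mem_iota /= add0n.
apply/idP/idP. move=> h; have := h => /ms ->; by rewrite (bound_s h).
by move=> /andP [/ms].
Qed.

Lemma hd_of x y N : ag x y N -> hd_eq x y (dd x y N).
Proof.
move=> h. exists (filter (fun k => x k != y k) (iota 0 N)); split; last split.
- by rewrite filter_uniq // iota_uniq.
- move=> k; rewrite mem_filter mem_iota /= add0n; split; first by case/andP.
  move=> e; rewrite e /=; rewrite ltnNge; apply/negP => /h; apply/eqP; exact: e.
- by rewrite size_filter count_dd.
Qed.

Lemma dd_lift x y N M : ag x y N -> N <= M -> dd x y M = dd x y N.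
Proof.
move=> h; elim: M => [|M IH]; first by rewrite leqn0 => /eqP ->.
rewrite leq_eqVlt => /orP [/eqP <-//|]. rewrite ltnS => hM /=.
by rewrite IH // h // eqxx addn0.
Qed.

Lemma ag_trans x y z N M : ag x y N -> ag y z M -> ag x z (maxn N M).
Proof.
move=> h1 h2 k; rewrite geq_max => /andP [a b]; by rewrite h1 // h2.
Qed.
Lemma ag_sym x y N : ag x y N -> ag y x N.
Proof. by move=> h k hk; rewrite h. Qed.
Lemma ag_mono x y N M : ag x y N -> N <= M -> ag x y M.
Proof. move=> h hm k hk; apply: h; exact: leq_trans hk. Qed.

Lemma dd_sym x y N : dd x y N = dd y x N.
Proof. by elim: N => //= N ->; rewrite eq_sym. Qed.

Lemma dd_odd x y z N : odd (dd x z N) = odd (dd x y N) (+) odd (dd y z N).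
Proof.
elim: N => //= N IH; rewrite !oddD IH.
by case: (x N); case: (y N); case: (z N); case: (odd (dd x y N)); case: (odd (dd y z N)).
Qed.

Lemma dd_ext x x' y N : (forall k, k < N -> x k = x' k) -> dd x y N = dd x' y N.
Proof.
elim: N => //= N IH h. rewrite IH ?h //. move=> k hk; apply: h; exact: ltnW.
Qed.

Lemma dd_flip x n N : dd x (flip x n) N = (n < N).
Proof.
elim: N => //= N ->; rewrite /flip.
case: (ltngtP N n) => [h|h|->]; rewrite ?eqxx.
- by rewrite ltnS leqNgt h.
- by rewrite ltnS ltnW.
- by rewrite ltnSn; case: (x n).
Qed.

Lemma ag_flip x n : ag x (flip x n) n.+1.
Proof. move=> k hk; rewrite /flip (gtn_eqF hk) //. Qed.
Lemma approxE x y : approx x y <-> exists N, ag x y N /\ ~~ odd (dd x y N).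
Proof.
split.
- move=> [n [/hd_to [N [h ->]] o]]; by exists N.
- move=> [N [h o]]; exists (dd x y N); split => //; exact: hd_of.
Qed.
Lemma simE x y : sim x y <-> exists N, ag x y N.
Proof.
split.
- move=> [n /hd_to [N [h _]]]; by exists N.
- move=> [N h]; exists (dd x y N); exact: hd_of.
Qed.
Lemma dd_indep x y N M : ag x y N -> ag x y M -> dd x y N = dd x y M.
Proof.
move=> h1 h2; rewrite -(dd_lift h1 (leq_maxl N M)) (dd_lift h2 (leq_maxr N M)) //.
Qed.
Lemma approx_any x y N : approx x y -> ag x y N -> ~~ odd (dd x y N).
Proof. move=> /approxE [M [h o]] h'; by rewrite (dd_indep h' h). Qed.
Lemma approx_refl x : approx x x.
Proof. apply/approxE; exists 0; split => //. Qed.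
Lemma approx_sym x y : approx x y -> approx y x.
Proof. move=> /approxE [N [h o]]; apply/approxE; exists N; split; [exact: ag_sym| by rewrite dd_sym]. Qed.
Lemma approx_trans x y z : approx x y -> approx y z -> approx x z.
Proof.
move=> /approxE [N [h o]] /approxE [M [h' o']]; apply/approxE.
exists (maxn N M); split; first exact: ag_trans h h'.
rewrite (dd_odd _ y) (dd_lift h (leq_maxl N M)) (dd_lift h' (leq_maxr N M)).
by move: o o'; case: (odd _); case: (odd _).
Qed.
Lemma sim_sym x y : sim x y -> sim y x.
Proof. move=> /simE [N h]; apply/simE; exists N; exact: ag_sym. Qed.
Lemma sim_trans x y z : sim x y -> sim y z -> sim x z.
Proof. move=> /simE [N h] /simE [M h']; apply/simE; exists (maxn N M); exact: ag_trans h h'. Qed.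
Lemma approx_sim x y : approx x y -> sim x y.
Proof. move=> [n [h _]]; by exists n. Qed.
Lemma class_eq z x : approx z x -> (fun y => approx z y) = (fun y => approx x y).
Proof.
move=> h; apply: functional_extensionality => y; apply: propositional_extensionality; split.
- by apply: approx_trans; apply: approx_sym.
- exact: approx_trans.
Qed.
Lemma flip_napprox x n : ~ approx x (flip x n).
Proof. move=> a; have := approx_any a (@ag_flip x n). by rewrite dd_flip ltnSn. Qed.
Lemma sim_flip x n : sim x (flip x n).
Proof. apply/simE; exists n.+1; exact: ag_flip. Qed.

Lemma xor_ind X : xor_set X -> forall N x y, ag x y N ->
  (X y <-> (if odd (dd x y N) then ~ X x else X x)).
Proof.
move=> hX; elim=> [|N IH] x y h.
  have e : x = y by apply: functional_extensionality => k; exact: h.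
  by subst.
case e: (x N == y N).
- have h' : ag x y N.
    move=> k; rewrite leq_eqVlt => /orP [/eqP <-|hk]; [exact/eqP| exact: h].
  by rewrite /= e addn0; apply: IH.
- have h' : ag (flip x N) y N.
    move=> k; rewrite leq_eqVlt => /orP [/eqP <-|hk].
      rewrite /flip eqxx; move: e; by case: (x N); case: (y N).
    rewrite /flip (gtn_eqF hk); exact: h.
  have ed : dd (flip x N) y N = dd x y N.
    apply/esym/dd_ext => k hk; by rewrite /flip (ltn_eqF hk).
  rewrite /= e addn1 /= -ed; rewrite (IH _ _ h').
  have := hX N x.
  destruct (classic (X x)); case: (odd _) => /=; tauto.
Qed.

Lemma p0_pfam x : Pfam (fun U => approx_class U /\ forall y, U y -> sim x y).
Proof. exists (fun y => sim x y); split => //; by exists x. Qed.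

Lemma Kbig (S : pset (pset seq2)) (x : seq2) : selector Pfam S -> (Defs.bigU S x <-> S (fun y => approx x y)).
Proof.
move=> [s1 s2]; split.
- move=> [U [SU Ux]]. have [p [[C [_ ->]] [[z e] _]]] := s1 _ SU.
  subst U. by rewrite -(class_eq Ux).
- move=> h; exists (fun y => approx x y); split => //; exact: approx_refl.
Qed.

Lemma closure X x y : xor_set X -> X x -> approx x y -> X y.
Proof.
move=> hX hx /approxE [N [h o]]. apply/(xor_ind hX h). by rewrite (negbTE o).
Qed.

Theorem lemma12 (X : pset seq2) :
  xor_set X <-> exists S : pset (pset seq2), Defs.selector Pfam S /\ X = Defs.bigU S.
Proof.
split.
- move=> hX. exists (fun U => exists x, X x /\ U = (fun y => approx x y)).
  have key : forall x1 x2, X x1 -> X x2 -> sim x1 x2 ->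
      (fun y => approx x1 y) = (fun y => approx x2 y).
    move=> x1 x2 h1 h2 /simE [N h]. have := (xor_ind hX h).1 h2.
    case o: (odd _) => // _. apply: class_eq; apply/approxE; exists N; by rewrite o.
  split; [split|].
  + move=> U [x [_ ->]]; exists (fun U => approx_class U /\ forall y, U y -> sim x y).
    split; first exact: p0_pfam. split; [by exists x| move=> y; exact: approx_sim].
  + move=> p [C [[c ->] ->]].
    case: (classic (X c)) => hc.
    * exists (fun y => approx c y); split.
        split; [split; [by exists c| move=> y; exact: approx_sim]| by exists c].
      move=> U' [[_ sub] [x' [hx' e]]]; subst U'. apply: key => //. exact: (sub x' (approx_refl x')).
    * have hf : X (flip c 0).
        have := hX 0 c. case: (classic (X (flip c 0))); tauto.
      exists (fun y => approx (flip c 0) y); split.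
        split; [split; [by exists (flip c 0)| move=> y a]| by exists (flip c 0)].
        exact: sim_trans (sim_flip c 0) (approx_sim a).
      move=> U' [[_ sub] [x' [hx' e]]]; subst U'. apply: key => //.
      exact: sim_trans (sim_sym (sim_flip c 0)) (sub x' (approx_refl x')).
  + apply: functional_extensionality => y; apply: propositional_extensionality; split.
      move=> hy; exists (fun z => approx y z); split; [by exists y| exact: approx_refl].
    move=> [U [[x [hx ->]] a]]. exact: closure hX hx a.
- move=> [S [sel ->]] n x. rewrite !(Kbig _ sel).
  have [s1 s2] := sel.
  have [U [[pU SU] uq]] := s2 _ (p0_pfam x).
  have inx : (fun U => approx_class U /\ forall y, U y -> sim x y) (fun y => approx x y).
    split; [by exists x| move=> y; exact: approx_sim].
  have inf : (fun U => approx_class U /\ forall y, U y -> sim x y) (fun y => approx (flip x n) y).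
    split; [by exists (flip x n)| move=> y a; exact: sim_trans (sim_flip x n) (approx_sim a)].
  split.
  + move=> a b. have e1 := uq _ (conj inx a). have e2 := uq _ (conj inf b).
    rewrite e1 in e2. apply: (@flip_napprox x n). have := congr1 (fun f => f (flip x n)) e2 => /= ->; exact: approx_refl.
  + move=> nf. move: pU SU => [[z ->] sub] SU.
    have /simE [N h] := sub z (approx_refl z).
    pose M := maxn N n.+1.
    have hM : ag x z M by apply: ag_mono h (leq_maxl _ _).
    case o: (odd (dd x z M)).
    * exfalso; apply: nf.
      have a : approx (flip x n) z.
        apply/approxE; exists (maxn n.+1 M); split.
          exact: ag_trans (ag_sym (@ag_flip x n)) hM.
        rewrite (dd_odd _ x) dd_sym dd_flip (dd_lift hM (leq_maxr _ _)) o.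
        by rewrite (leq_trans (leqnn n.+1) (leq_maxl _ _)).
      by rewrite -(class_eq (approx_sym a)).
    * have a : approx x z by apply/approxE; exists M; rewrite o.
      by rewrite -(class_eq (approx_sym a)).
Qed.
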